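(* For every $n\geq 2$, if $T$ is the caterpillar tree on a leaf set $X$ with $|X|=n$, then there exist strictly positive edge lengths for $T$ such that the ranking $\pi_T$ is strict and reversible with respect to $X'=\{x\}$, where $x=\arg\min_{x'\in X}FP_T(x')$ is the leaf with the lowest Fair Proportion index.
   Context: A rooted binary phylogenetic $X$-tree ($X$ finite, $|X|=n$) is a rooted tree whose root $\rho$ has in-degree 0 and out-degree 2, all edges directed away from $\rho$, all other interior vertices have in-degree 1 and out-degree 2, and whose leaves are bijectively labelled by $X$. Every edge $e$ has a strictly positive length $\lambda_e$. A cherry is a pair of leaves with the same parent; a caterpillar tree is a rooted binary phylogenetic tree with exactly one cherry. The Fair Proportion index of $x\in X$ is $FP_T(x)=\sum_{e\in P(T;\rho,x)}\lambda_e/D_e$, where $P(T;\rho,x)$ is the path from $\rho$ to $x$ and $D_e$ is the number of leaves descended from $e$. For $Y\subseteq X$, the induced subtree $T_Y$ is obtained from the minimal subtree of $T$ connecting $Y$ by suppressing all non-root vertices of in- and out-degree 1, adding the lengths of merged edges; if the root then has out-degree 1, it and its incident edge are deleted. The ranking $\pi_T$ orders $X$ by decreasing $FP_T$; it is strict if all values $FP_T(x)$ are pairwise distinct. For $X'\subset X$, $\widetilde X=X\setminus X'$ and $\widetilde T=T_{\widetilde X}$, a strict ranking $\pi_T$ is reversible with respect to $X'$ if for all distinct $x_i,x_j\in\widetilde X$, $FP_T(x_i)>FP_T(x_j)$ implies $FP_{\widetilde T}(x_i)<FP_{\widetilde T}(x_j)$. *)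

(* Defs.v *)
From HB Require Import structures.
From mathcomp Require Import all_boot all_order all_algebra.
From mathcomp Require Import reals.
Set Implicit Arguments. Unset Strict Implicit. Unset Printing Implicit Defensive.
Import Order.TTheory GRing.Theory Num.Theory.
Local Open Scope ring_scope.

(* Rooted binary phylogenetic trees with edge lengths.
   [Node l a r b] is an interior vertex with two children l and r; a (resp. b)
   is the length of the edge from this vertex to l (resp. r).  The root is the
   top-level [Node]; it has no incoming edge. *)
Inductive tree (X : Type) (R : Type) :=
  | Leaf of X
  | Node of tree X R & R & tree X R & R.
Arguments Leaf {X R}.
Arguments Node {X R}.

Section Trees.
Variables (X : eqType) (R : realType).

Fixpoint leaves (t : tree X R) : seq X :=
  match t with
  | Leaf x => [:: x]
  | Node l _ r _ => leaves l ++ leaves r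
  end.

Definition labelled_by (t : tree X R) (s : seq X) := perm_eq (leaves t) s.

Fixpoint pos_lengths (t : tree X R) : Prop :=
  match t with
  | Leaf _ => True
  | Node l a r b => [/\ 0 < a, 0 < b, pos_lengths l & pos_lengths r]
  end.

Fixpoint same_shape (t u : tree X R) : Prop :=
  match t, u with
  | Leaf x, Leaf y => x = y
  | Node l _ r _, Node l' _ r' _ => same_shape l l' /\ same_shape r r'
  | _, _ => False
  end.

Fixpoint cherries (t : tree X R) : nat :=
  match t with
  | Leaf _ => 0
  | Node (Leaf _) _ (Leaf _) _ => 1
  | Node l _ r _ => cherries l + cherries r
  end.

Definition caterpillar (t : tree X R) := cherries t = 1%N.

(* Fair Proportion index: sum over the edges e on the path from the root to x
   of lambda_e / D_e, D_e = number of leaves below e. *)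
Fixpoint FP (t : tree X R) (x : X) : R :=
  match t with
  | Leaf _ => 0
  | Node l a r b =>
      if x \in leaves l then a / (size (leaves l))%:R + FP l x
      else if x \in leaves r then b / (size (leaves r))%:R + FP r x
      else 0
  end.

(* Restriction to the leaves satisfying Y: returns the restricted subtree
   together with the extra length to be added to its incoming edge
   (resulting from suppressing vertices of in- and out-degree 1). *)
Fixpoint restrict (Y : pred X) (t : tree X R) : option (tree X R * R) :=
  match t with
  | Leaf x => if Y x then Some (Leaf x, 0) else None
  | Node l a r b =>
      match restrict Y l, restrict Y r with
      | Some (l', el), Some (r', er) => Some (Node l' (a + el) r' (b + er), 0)
      | Some (l', el), None => Some (l', a + el)
      | None, Some (r', er) => Some (r', b + er)
      | None, None => None
      end
  end.

(* Induced subtree T_Y: at the top the root of out-degree 1 and its edge are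
   deleted, i.e. the extra length above the new root is discarded. *)
Definition induced (Y : pred X) (t : tree X R) : option (tree X R) :=
  omap fst (restrict Y t).

Definition FPo (t : option (tree X R)) (x : X) : R :=
  if t is Some u then FP u x else 0.

Definition strict_ranking (s : seq X) (t : tree X R) :=
  {in s &, forall x y, x != y -> FP t x != FP t y}.

Definition reversible1 (s : seq X) (t : tree X R) (x : X) :=
  strict_ranking s t /\
  {in [seq y <- s | y != x] &, forall xi xj,
      FP t xi > FP t xj ->
      FPo (induced (predC1 x) t) xi < FPo (induced (predC1 x) t) xj}.

End Trees.

(* Main.v *)
Require Import Defs.
From mathcomp Require Import all_boot all_order all_algebra.
From mathcomp Require Import reals.
From mathcomp Require Import ring lra zify.
Import Order.TTheory GRing.Theory Num.Theory.
Local Open Scope ring_scope.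

Section Proof.
Variables (X : eqType) (R : realType).
Implicit Types (T t : tree X R).

Lemma same_shape_leaves (T T0 : tree X R) : same_shape T T0 -> leaves T = leaves T0.
Proof.
elim: T T0 => [x|l IHl a r IHr b] [y|l' a' r' b'] //=; first by move->.
by case=> /IHl-> /IHr->.
Qed.

Definition Inv (T : tree X R) : Prop :=
  [/\ (2 <= size (leaves T))%N, uniq (leaves T) &
  exists z M L t' e, [/\ z \in leaves T, restrict (predC1 z) T = Some (t', e), 0 <= e,
     (forall x, (x \in leaves t') = (x \in leaves T) && (x != z)) &
     [/\ size (leaves t') = (size (leaves T)).-1,
      (forall x, x \in leaves T -> FP T x <= M),
      (forall x, x \in leaves t' -> L <= FP t' x),
      (forall x y, x \in leaves T -> y \in leaves T -> x != y -> FP T x != FP T y) &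
      ((forall x, x \in leaves T -> x != z -> FP T z < FP T x) /\
      (forall x y, x \in leaves t' -> y \in leaves t' -> FP T x < FP T y -> FP t' y < FP t' x))]]].

Lemma step T' y : Inv T' -> y \notin leaves T' -> exists p q, [/\ 0 < p, 0 < q &
  forall Tn, (forall x, (x \in leaves Tn) = (x == y) || (x \in leaves T')) ->
   size (leaves Tn) = (size (leaves T')).+1 -> uniq (leaves Tn) ->
   FP Tn y = p -> (forall x, x \in leaves T' -> FP Tn x = q / (size (leaves T'))%:R + FP T' x) ->
   (forall z t' e, restrict (predC1 z) T' = Some (t', e) -> z != y ->
      (forall x, x \in leaves t' -> x != y) ->
      exists tn', [/\ restrict (predC1 z) Tn = Some (tn', 0),
      (forall x, (x \in leaves tn') = (x == y) || (x \in leaves t')),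
      size (leaves tn') = (size (leaves t')).+1,
      FP tn' y = p &
      (forall x, x \in leaves t' -> FP tn' x = (q+e) / (size (leaves t'))%:R + FP t' x)]) ->
   Inv Tn].
Proof.
move=> [hm hu [z [M [L [t' [e [hz hr he hmem [hs hM hL hst [hzmin hrev]]]]]]]]] hy.
set m := size (leaves T') in hm hs *.
set a : R := m%:R; set b : R := (size (leaves t'))%:R.
have hb1 : 1 <= b by rewrite /b hs ler1n; move: hm; clear; case: m => [|[|m']].
have hab : a = b + 1 by rewrite /a /b hs natr1 prednK //; move: hm; clear; case: m.
set K := `|M| + `|L| + 1.
have hM0 := ler_norm M.
have hL0 : 0 <= L + `|L| by have := ler_norm (- L); rewrite normrN; lra.
have hLn : 0 <= `|L| := normr_ge0 L.
have hMn : 0 <= `|M| := normr_ge0 M.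
have hK : 1 <= K by rewrite /K; lra.
have hKd : K = `|M| + `|L| + 1 by [].
clearbody K.
have hbK : b <= b * K.
  have : 0 <= b * (K - 1) by apply: mulr_ge0; lra.
  by rewrite mulrBr mulr1; lra.
have haK : a * K = b * K + K by rewrite hab mulrDl mul1r.
exists (b*K + `|M| + 1/2), (a*b*K).
have qa : a*b*K / a = b*K.
  have ha0 : a != 0 by rewrite hab; apply/eqP; lra.
  by field.
have qb : (a*b*K + e)/b = a*K + e/b.
  have hb0 : b != 0 by apply/eqP; lra.
  by field.
have eb : 0 <= e/b by apply: divr_ge0 => //; lra.
split; first by lra.
  by rewrite -mulrA mulr_gt0 //; [rewrite hab|]; nra.
move=> Tn h1 h2 h3 h5 h6 h7.
have hzy : z != y by apply: contraNneq hy => <-.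
have hty : forall x, x \in leaves t' -> x != y.
  by move=> x; rewrite hmem => /andP[hx _]; apply: contraNneq hy => <-.
have [tn' [hrn hmn hsn hfy hfx]] := h7 z t' e hr hzy hty.
have hTx : forall x, x \in leaves T' -> FP Tn x = b * K + FP T' x.
  by move=> x hx; rewrite h6 // -/a qa.
split; first by rewrite h2; apply: leqW.
  exact: h3.
exists z, (b*K + `|M| + 1/2), (b*K + `|M| + 1/2), tn', 0.
split => //.
- by rewrite h1 hz orbT.
- move=> x; rewrite hmn h1 hmem; case: eqVneq => [->|] //=; by rewrite eq_sym hzy.
split.
- by rewrite hsn h2 hs prednK //; move: hm; clear; case: m.
- move=> x; rewrite h1 => /orP[/eqP->|hx]; first by rewrite h5.
  by rewrite hTx //; have := hM x hx; lra.
- move=> x; rewrite hmn => /orP[/eqP->|hx]; first by rewrite hfy.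
  by rewrite hfx // -/b qb; have := hL x hx; lra.
- move=> x x'; rewrite !h1 => /orP[/eqP->|hx] /orP[/eqP->|hx'] hne.
  + by rewrite eqxx in hne.
  + rewrite h5 hTx // neq_lt; apply/orP; right; have := hM x' hx'; lra.
  + rewrite h5 hTx // neq_lt; apply/orP; left; have := hM x hx; lra.
  + rewrite !hTx //; apply/negP => /eqP E; move/negP: (hst x x' hx hx' hne); apply; apply/eqP; lra.
split.
- move=> x; rewrite h1 => /orP[/eqP->|hx] hxz.
    by rewrite h5 hTx //; have := hM z hz; lra.
  by rewrite !hTx //; have := hzmin x hx hxz; lra.
- have hx't : forall x, x \in leaves t' -> x \in leaves T'.
    by move=> x; rewrite hmem => /andP[].
  move=> x x'; rewrite !hmn => /orP[/eqP->|hx] /orP[/eqP->|hx'].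
  + by lra.
  + rewrite h5 hTx ?hx't //; have := hM x' (hx't _ hx'); lra.
  + move=> _; rewrite hfy hfx // -/b qb; have := hL x hx; lra.
  + rewrite !hTx ?hx't // !hfx // => hlt.
    have : FP T' x < FP T' x' by lra.
    move/(hrev x x' hx hx'); lra.
Qed.


Lemma cherries_pos t : (match t with Leaf _ => 0 | _ => 1 end <= cherries t)%N.
Proof.
elim: t => [x|l IHl a r IHr b] //.
case: l IHl => [y|l1 a1 l2 b1] IHl; case: r IHr => [y'|r1 c r2 d] IHr //.
- change (0 < cherries (Node l1 a1 l2 b1) + cherries (Leaf (R:=R) y'))%N.
  exact: (leq_trans IHl (leq_addr _ _)).
- change (0 < cherries (Node l1 a1 l2 b1) + cherries (Node r1 c r2 d))%N.
  exact: (leq_trans IHl (leq_addr _ _)).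
Qed.

Lemma base y1 y2 : y1 != y2 -> Inv (Node (Leaf y1) 2 (Leaf y2) 1).
Proof.
move=> hne; split => //; first by rewrite /= inE hne.
have hr : restrict (predC1 y2) (Node (Leaf y1) 2 (Leaf (R:=R) y2) 1) = Some (Leaf y1, 2 + 0).
  by rewrite /= hne eqxx.
have F1 : FP (Node (Leaf y1) 2 (Leaf (R:=R) y2) 1) y1 = 2 by rewrite /= inE eqxx divr1 addr0.
have F2 : FP (Node (Leaf y1) 2 (Leaf (R:=R) y2) 1) y2 = 1.
  by rewrite /= !inE eq_sym (negbTE hne) eqxx divr1 addr0.
exists y2, 2, 0, (Leaf y1), (2 + 0); split => //.
- by rewrite !inE eqxx orbT.
- by lra.
- move=> x /=; rewrite !inE; case: (eqVneq x y1) => [->|] /=; first by rewrite hne.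
  move=> _; by case: eqVneq.
split => //.
- by move=> x; rewrite !inE => /orP[]/eqP->; rewrite ?F1 ?F2; lra.
- move=> x x'; rewrite !inE => /orP[]/eqP-> /orP[]/eqP->; rewrite ?eqxx // ?F1 ?F2 => _.
  + by rewrite gt_eqF //; lra.
  + by rewrite lt_eqF //; lra.
split.
- by move=> x; rewrite !inE => /orP[]/eqP->; rewrite ?eqxx // F1 F2; lra.
- by move=> x x'; rewrite !inE => /eqP-> /eqP->; lra.
Qed.

Lemma build (T0 : tree X R) : cherries T0 = 1%N -> uniq (leaves T0) ->
  exists T, [/\ same_shape T T0, pos_lengths T & Inv T].
Proof.
elim: T0 => [x|l IHl a r IHr b] hc0 hu0; first by [].
move: hc0 hu0.
case: l IHl => [y|l1 a1 l2 b1] IHl; case: r IHr => [y'|r1 c r2 d] IHr.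
- move=> _; rewrite /= inE andbT => hne.
  exists (Node (Leaf y) 2 (Leaf y') 1); split => //=; exact: base.
- move=> hc0; have hc : cherries (Node r1 c r2 d) = 1%N by exact: hc0.
  rewrite /= => /andP[hy hu].
  have [T' [hsh hpos hinv]] := IHr hc hu.
  have hl := same_shape_leaves _ _ hsh.
  have hy' : y \notin leaves T' by rewrite hl.
  have [p [q [hp hq hs]]] := step _ _ hinv hy'.
  exists (Node (Leaf y) p T' q); split => //.
  apply: hs.
  + by move=> x; rewrite /= inE.
  + by [].
  + by rewrite /= hy' hl; exact: hu.
  + by rewrite /= inE eqxx divr1 addr0.
  + move=> x hx; rewrite /= inE.
    have -> : (x == y) = false by apply/eqP => E; move: hy'; rewrite -E hx.
    by rewrite hx.
  + move=> z t' e hr hzy hty; rewrite /= hr /= eq_sym hzy.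
    exists (Node (Leaf y) (p + 0) t' (q + e)); split.
    * by [].
    * by move=> x; rewrite /= inE.
    * by [].
    * by rewrite /= inE eqxx divr1 !addr0.
    * by move=> x hx; rewrite /= inE (negbTE (hty x hx)) hx.
- move=> hc0; have hc : cherries (Node l1 a1 l2 b1) = 1%N.
    by move: hc0; change ((cherries (Node l1 a1 l2 b1) + 0 = 1)%N -> cherries (Node l1 a1 l2 b1) = 1%N); rewrite addn0.
  rewrite /= cat_uniq /= orbF andbT => /andP[hu hy].
  have [T' [hsh hpos hinv]] := IHl hc hu.
  have hl := same_shape_leaves _ _ hsh.
  have hy' : y' \notin leaves T' by rewrite hl.
  have [p [q [hp hq hs]]] := step _ _ hinv hy'.
  exists (Node T' q (Leaf y') p); split => //.
  apply: hs.
  + by move=> x; rewrite /= mem_cat inE orbC.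
  + by rewrite /= size_cat addn1.
  + by rewrite /= cat_uniq /= orbF hy' !andbT hl; exact: hu.
  + by rewrite /= (negbTE hy') inE eqxx divr1 addr0.
  + by move=> x hx; rewrite /= hx.
  + move=> z t' e hr hzy hty; rewrite /= hr /= eq_sym hzy.
    exists (Node t' (q + e) (Leaf y') (p + 0)); split.
    * by [].
    * by move=> x; rewrite /= mem_cat inE orbC.
    * by rewrite /= size_cat addn1.
    * rewrite /=; have -> : (y' \in leaves t') = false by apply/negP => /hty; rewrite eqxx.
      by rewrite /= inE eqxx divr1 !addr0.
    * by move=> x hx; rewrite /= hx.
- move=> hc0 _; exfalso.
  have hc : (cherries (Node l1 a1 l2 b1) + cherries (Node r1 c r2 d) = 1)%N by exact: hc0.
  have h1 := cherries_pos (Node l1 a1 l2 b1); have h2 := cherries_pos (Node r1 c r2 d).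
  move: hc h1 h2; simpl; lia.
Qed.

End Proof.

Theorem corollary1 (R : realType) (n : nat) (X : finType) (T0 : tree X R) :
  (2 <= n)%N -> #|X| = n ->
  labelled_by T0 (enum X) -> caterpillar T0 ->
  exists T : tree X R,
    [/\ same_shape T T0, pos_lengths T, strict_ranking (enum X) T &
        forall x : X, (forall y : X, FP T x <= FP T y) ->
          reversible1 (enum X) T x].
Proof.
move=> _ _ hlab hcat.
have hu0 : uniq (leaves T0) by rewrite (perm_uniq hlab) enum_uniq.
have [T [hsh hpos [_ _ [z [M [L [t' [e [hz hr he hmem [hs hM hL hst [hzmin hrev]]]]]]]]]]] :=
  build _ _ T0 hcat hu0.
have hl := same_shape_leaves _ _ _ _ hsh.
have hall : forall x : X, x \in leaves T by move=> x; rewrite hl (perm_mem hlab) mem_enum.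
have hsr : strict_ranking (enum X) T by move=> x y _ _; exact: hst.
exists T; split => // x hmin.
have hxz : x = z.
  apply/eqP; apply/negP => /negP hne.
  have := hzmin x (hall x) hne; have := hmin z; lra.
subst x; split => //.
move=> xi xj; rewrite !mem_filter => /andP[hi _] /andP[hj _] hlt.
have hind : induced (predC1 z) T = Some t' by rewrite /induced hr.
rewrite hind /=.
apply: hrev; rewrite ?hmem ?hall ?hi ?hj //.
Qed.
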